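(* Let $G=(U,\alpha)$ and $H=(V,\beta)$ be connected graphs with degree functions $p$ and $q$. If $\gamma$ is a weight function on $U\times V$ with degree function $r(u,v)=\sum_{(u',v')\in U\times V}\gamma((u,v),(u',v'))$ satisfying, for all $u,u'\in U$ and $v,v'\in V$, $p(u)\sum_{\tilde v\in V}\gamma((u,v),(u',\tilde v))=\alpha(u,u')\,r(u,v)$ and $q(v)\sum_{\tilde u\in U}\gamma((u,v),(\tilde u,v'))=\beta(v,v')\,r(u,v)$, then $\sum_{v\in V}r(u,v)=p(u)$ for all $u\in U$ and $\sum_{u\in U}r(u,v)=q(v)$ for all $v\in V$.
   Context: A weight function on a finite set $U$ is $\alpha:U\times U\to\mathbb{R}$ with $\alpha\ge0$, $\alpha(u,u')=\alpha(u',u)$, and $\sum_{u,u'}\alpha(u,u')=1$; its degree function is $p(u)=\sum_{u'}\alpha(u,u')$. A graph is $(U,\alpha)$; it is connected if any two distinct vertices are joined by a path of edges $(u,u')$ with $\alpha(u,u')>0$. *)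

(* Defs.v *)
From mathcomp Require Import all_boot all_order all_algebra.
Set Implicit Arguments. Unset Strict Implicit. Unset Printing Implicit Defensive.
Import Order.TTheory GRing.Theory Num.Theory.
Local Open Scope ring_scope.

Definition is_weight (R : realFieldType) (U : finType) (a : U -> U -> R) : Prop :=
  (forall u u', 0 <= a u u') /\ (forall u u', a u u' = a u' u) /\
  (\sum_(u : U) \sum_(u' : U) a u u' = 1).

Definition degf (R : realFieldType) (U : finType) (a : U -> U -> R) (u : U) : R :=
  \sum_(u' : U) a u u'.

Definition edge_rel (R : realFieldType) (U : finType) (a : U -> U -> R) : rel U :=
  fun u u' => 0 < a u u'.

Definition connected_graph (R : realFieldType) (U : finType) (a : U -> U -> R) : Prop :=
  forall u u' : U, u != u' ->
    exists2 s : seq U, path (edge_rel a) u s & last u s = u'.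

(* Main.v *)
Require Import Defs.
From mathcomp Require Import all_boot all_order all_algebra.
Import Order.TTheory GRing.Theory Num.Theory.
Local Open Scope ring_scope.

Lemma deg_pos (R : realFieldType) (U : finType) (a : U -> U -> R) :
  is_weight a -> connected_graph a -> forall u, 0 < degf a u.
Proof.
move=> [a0 [asym a1]] ac u.
case: (pickP (fun u' => u' != u)) => [u' Hu'|Hn].
  have ne : u != u' by rewrite eq_sym.
  have [s ps ls] := ac u u' ne.
  case: s ps ls => [|x s] /=; first by move=> _ E; rewrite E eqxx in Hu'.
  move=> /andP [ex _] _.
  rewrite /degf (bigD1 x) //=; apply: (lt_le_trans ex); rewrite lerDl.
  by apply: sumr_ge0 => i _.
have E : forall F : U -> R, \sum_(i : U) F i = F u.
  move=> F; rewrite (bigD1 u) //= big1 ?addr0 // => i Hi.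
  by move: (Hn i) => /= /negbT; rewrite negbK => /eqP E'; rewrite E' eqxx in Hi.
by move: a1; rewrite E /degf => ->; apply: ltr01.
Qed.

Lemma core (R : realFieldType) (U : finType) (a : U -> U -> R)
  (M : U -> U -> R) (P : U -> R) :
  is_weight a -> connected_graph a -> (forall u u', M u u' = M u' u) ->
  (forall u u', degf a u * M u u' = a u u' * P u) ->
  \sum_(u : U) P u = 1 -> forall u, P u = degf a u.
Proof.
move=> aw ac Ms HM PS u.
have [a0 [asym a1]] := aw.
have pp := @deg_pos _ _ _ aw ac.
pose f x := P x / degf a x.
have Mf : forall x y, M x y = a x y * f x.
  move=> x y; apply: (mulfI (lt0r_neq0 (pp x))).
  rewrite HM /f mulrA [degf a x * _]mulrC -!mulrA mulVf ?mulr1 //.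
  exact: lt0r_neq0.
have edge : forall x y, 0 < a x y -> f x = f y.
  move=> x y axy; apply: (mulfI (lt0r_neq0 axy)).
  by rewrite -Mf Ms Mf asym.
have pathc : forall s x, path (edge_rel a) x s -> f x = f (last x s).
  elim=> [|y s IH] x //= /andP [exy ps].
  by rewrite (edge _ _ exy) IH.
have cst : forall x, f x = f u.
  move=> x; case: (eqVneq u x) => [->//|ne].
  by have [s ps ls] := ac u x ne; rewrite (pathc _ _ ps) ls.
have Pe : forall x, P x = f u * degf a x.
  move=> x; rewrite -(cst x) /f -mulrA mulVf ?mulr1 //; exact: lt0r_neq0.
have fu1 : f u = 1.
  by move: PS; under eq_bigr => x _ do rewrite Pe; rewrite -mulr_sumr a1 mulr1.
by rewrite Pe fu1 mul1r.
Qed.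

Theorem proposition2p5 (R : realFieldType) (U V : finType)
  (alpha : U -> U -> R) (beta : V -> V -> R)
  (gamma : (U * V)%type -> (U * V)%type -> R) :
  is_weight alpha -> connected_graph alpha ->
  is_weight beta -> connected_graph beta ->
  is_weight gamma ->
  (forall (u u' : U) (v : V),
     degf alpha u * (\sum_(vt : V) gamma (u, v) (u', vt))
     = alpha u u' * degf gamma (u, v)) ->
  (forall (u : U) (v v' : V),
     degf beta v * (\sum_(ut : U) gamma (u, v) (ut, v'))
     = beta v v' * degf gamma (u, v)) ->
  (forall u : U, \sum_(v : V) degf gamma (u, v) = degf alpha u) /\
  (forall v : V, \sum_(u : U) degf gamma (u, v) = degf beta v).
Proof.
move=> aw ac bw bc gw H1 H2.
have [g0 [gsym g1]] := gw.
have tot : \sum_(u : U) \sum_(v : V) degf gamma (u, v) = 1.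
  by rewrite pair_big /=; rewrite -g1; apply: eq_bigr => -[].
split.
- apply: (@core _ _ _ (fun u u' => \sum_(v : V) \sum_(vt : V) gamma (u, v) (u', vt)) _ aw ac) => //.
  + move=> u u'; rewrite exchange_big; apply: eq_bigr => v _; apply: eq_bigr => vt _.
    by rewrite gsym.
  + move=> u u'; rewrite mulr_sumr mulr_sumr; apply: eq_bigr => v _; exact: H1.
- apply: (@core _ _ _ (fun v v' => \sum_(u : U) \sum_(ut : U) gamma (u, v) (ut, v')) _ bw bc) => //.
  + move=> v v'; rewrite exchange_big; apply: eq_bigr => u _; apply: eq_bigr => ut _.
    by rewrite gsym.
  + move=> v v'; rewrite mulr_sumr mulr_sumr; apply: eq_bigr => u _; exact: H2.
  + by rewrite exchange_big.
Qed.
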